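(* Let $n\ge 3$, let $K$ be a proper $4$-coloring of $G=H_2(n,n-1)$, and let $x_1,x_2,x_3,x_4$ be distinct vertices such that $(x_1,x_2),(x_2,x_3),(x_3,x_4),(x_4,x_1)$ are all transition edges for $K$. Then: (a) the colors $K(x_1),\dots,K(x_4)$ are pairwise distinct; (b) every vertex $y\notin\{x_1,\dots,x_4\}$ is adjacent to at most one of $x_1,\dots,x_4$, and if $y$ is adjacent to $x_i$ then $K(y)=K(\tilde{x}_i)$, where $\tilde{x}_i$ is the vertex opposite to $x_i$ on the cycle (i.e. $\tilde{x}_1=x_3$, $\tilde{x}_3=x_1$, $\tilde{x}_2=x_4$, $\tilde{x}_4=x_2$).
   Context: $H_2(n,n-1)$ is the simple undirected graph with vertex set $\mathbb{Z}_2^n$ in which $x,y$ are adjacent iff their Hamming distance is at least $n-1$. For a proper $k$-coloring $K$ of a simple graph, an edge $(x,y)$ is a transition edge for $K$ if swapping the colors of $x$ and $y$ (all other colors unchanged) yields again a proper $k$-coloring. *)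

(* Defs.v *)
From mathcomp Require Import all_boot.
Set Implicit Arguments. Unset Strict Implicit. Unset Printing Implicit Defensive.

Definition vert (n : nat) := {ffun 'I_n -> bool}.

Definition hdist (n : nat) (x y : vert n) : nat := #|[set i | x i != y i]|.

(* Adjacency in H_2(n,n-1): distinct and Hamming distance at least n-1
   (for n >= 3 distance >= n-1 already forces x != y). *)
Definition hadj (n : nat) (x y : vert n) : bool := (x != y) && (n.-1 <= hdist x y).

Definition proper_col (n k : nat) (K : vert n -> 'I_k) : Prop :=
  forall x y, hadj x y -> K x != K y.

Definition swap_col (n k : nat) (K : vert n -> 'I_k) (x y : vert n) : vert n -> 'I_k :=
  fun z => if z == x then K y else if z == y then K x else K z.

Definition transition_edge (n k : nat) (K : vert n -> 'I_k) (x y : vert n) : Prop :=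
  hadj x y /\ proper_col (swap_col K x y).

(* Main.v *)
Require Import Defs.
From mathcomp Require Import all_boot.

Lemma hadj_sym n (x y : vert n) : hadj x y = hadj y x.
Proof.
rewrite /hadj /hdist eq_sym; congr (_ && (_ <= _)).
by apply: eq_card => i; rewrite !inE eq_sym.
Qed.

Lemma hadj_neq n (x y : vert n) : hadj x y -> x != y.
Proof. by case/andP. Qed.

Lemma trans_l {n k} {K : vert n -> 'I_k} {x y z} :
  transition_edge K x y -> hadj x z -> z != y -> K y != K z.
Proof.
case=> _ P hxz nzy; have := P x z hxz; rewrite /swap_col eqxx.
have nzx : z != x by rewrite eq_sym hadj_neq.
by rewrite (negbTE nzx) (negbTE nzy).
Qed.

Lemma trans_r {n k} {K : vert n -> 'I_k} {x y z} :
  transition_edge K x y -> hadj y z -> z != x -> K x != K z.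
Proof.
case=> hxy P hyz nzx; have := P y z hyz; rewrite /swap_col eqxx.
have nyx : y != x by rewrite eq_sym hadj_neq.
have nzy : z != y by rewrite eq_sym hadj_neq.
by rewrite (negbTE nyx) (negbTE nzx) (negbTE nzy).
Qed.

Lemma four (a b c d y : 'I_4) :
  uniq [:: a; b; c; d] -> y != a -> y != b -> y != d -> y = c.
Proof.
case: a => [[|[|[|[|a]]]] Ha] //; case: b => [[|[|[|[|b]]]] Hb] //;
case: c => [[|[|[|[|c]]]] Hc] //; case: d => [[|[|[|[|d]]]] Hd] //;
case: y => [[|[|[|[|y]]]] Hy] //; by move=> *; apply/val_inj.
Qed.

Theorem lemma5p6 (n : nat) (K : vert n -> 'I_4) (x1 x2 x3 x4 : vert n) :
  3 <= n ->
  proper_col K ->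
  uniq [:: x1; x2; x3; x4] ->
  transition_edge K x1 x2 -> transition_edge K x2 x3 ->
  transition_edge K x3 x4 -> transition_edge K x4 x1 ->
  uniq [:: K x1; K x2; K x3; K x4] /\
  (forall y : vert n, y \notin [:: x1; x2; x3; x4] ->
     (count (hadj y) [:: x1; x2; x3; x4] <= 1) /\
     (hadj y x1 -> K y = K x3) /\ (hadj y x2 -> K y = K x4) /\
     (hadj y x3 -> K y = K x1) /\ (hadj y x4 -> K y = K x2)).
Proof.
move=> _ PK U T12 T23 T34 T41.
have /= /andP[U1 /andP[U2 /andP[U3 _]]] := U.
move: U1 U2 U3; rewrite !inE !negb_or => /and3P[n12 n13 n14] /andP[n23 n24] n34.
have A12 := T12.1; have A23 := T23.1; have A34 := T34.1; have A41 := T41.1.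
have k12 := PK _ _ A12; have k23 := PK _ _ A23; have k34 := PK _ _ A34.
have k41 := PK _ _ A41.
have k13 : K x1 != K x3.
  by apply: (trans_r T12 A23); rewrite eq_sym.
have k24 : K x2 != K x4 by apply: (trans_r T23 A34); rewrite eq_sym.
have k14 : K x1 != K x4 by rewrite eq_sym.
have k21 : K x2 != K x1 by rewrite eq_sym.
have k31 : K x3 != K x1 by rewrite eq_sym.
have k32 : K x3 != K x2 by rewrite eq_sym.
have k42 : K x4 != K x2 by rewrite eq_sym.
have k43 : K x4 != K x3 by rewrite eq_sym.
have KU : uniq [:: K x1; K x2; K x3; K x4] by rewrite /= !inE !negb_or ?k12 ?k13 ?k14 ?k21 ?k23 ?k24 ?k31 ?k32 ?k34 ?k41 ?k42 ?k43.
split; first by rewrite k12 k13 k14 k23 k24 k34.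
move=> y; rewrite !inE !negb_or => /and4P[y1 y2 y3 y4].
have c1 : hadj y x1 -> K y = K x3.
  move=> h; rewrite hadj_sym in h.
  apply: (@four (K x1) (K x2) (K x3) (K x4)) => //.
  - by rewrite eq_sym; apply: PK.
  - by rewrite eq_sym; apply: (trans_l T12 h).
  - by rewrite eq_sym; apply: (trans_r T41 h).
have c2 : hadj y x2 -> K y = K x4.
  move=> h; rewrite hadj_sym in h.
  have KU' : uniq [:: K x2; K x3; K x4; K x1] by rewrite /= !inE !negb_or ?k12 ?k13 ?k14 ?k21 ?k23 ?k24 ?k31 ?k32 ?k34 ?k41 ?k42 ?k43.
  apply: (@four (K x2) (K x3) (K x4) (K x1)) => //.
  - by rewrite eq_sym; apply: PK.
  - by rewrite eq_sym; apply: (trans_l T23 h).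
  - by rewrite eq_sym; apply: (trans_r T12 h).
have c3 : hadj y x3 -> K y = K x1.
  move=> h; rewrite hadj_sym in h.
  have KU' : uniq [:: K x3; K x4; K x1; K x2] by rewrite /= !inE !negb_or ?k12 ?k13 ?k14 ?k21 ?k23 ?k24 ?k31 ?k32 ?k34 ?k41 ?k42 ?k43.
  apply: (@four (K x3) (K x4) (K x1) (K x2)) => //.
  - by rewrite eq_sym; apply: PK.
  - by rewrite eq_sym; apply: (trans_l T34 h).
  - by rewrite eq_sym; apply: (trans_r T23 h).
have c4 : hadj y x4 -> K y = K x2.
  move=> h; rewrite hadj_sym in h.
  have KU' : uniq [:: K x4; K x1; K x2; K x3] by rewrite /= !inE !negb_or ?k12 ?k13 ?k14 ?k21 ?k23 ?k24 ?k31 ?k32 ?k34 ?k41 ?k42 ?k43.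
  apply: (@four (K x4) (K x1) (K x2) (K x3)) => //.
  - by rewrite eq_sym; apply: PK.
  - by rewrite eq_sym; apply: (trans_l T41 h).
  - by rewrite eq_sym; apply: (trans_r T34 h).
split=> //.
have py : forall x, hadj y x -> K y != K x by move=> x; apply: PK.
have d12 : hadj y x1 -> hadj y x2 -> False.
  by move=> a b; move: k34; rewrite -(c1 a) -(c2 b) eqxx.
have d13 : hadj y x1 -> hadj y x3 -> False.
  by move=> a b; move: (py x3 b); rewrite -(c1 a) eqxx.
have d14 : hadj y x1 -> hadj y x4 -> False.
  by move=> a b; move: k32; rewrite -(c1 a) -(c4 b) eqxx.
have d23 : hadj y x2 -> hadj y x3 -> False.
  by move=> a b; move: k41; rewrite -(c2 a) -(c3 b) eqxx.
have d24 : hadj y x2 -> hadj y x4 -> False.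
  by move=> a b; move: (py x4 b); rewrite -(c2 a) eqxx.
have d34 : hadj y x3 -> hadj y x4 -> False.
  by move=> a b; move: k12; rewrite -(c3 a) -(c4 b) eqxx.
case h1: (hadj y x1); case h2: (hadj y x2);
case h3: (hadj y x3); case h4: (hadj y x4) => //=; exfalso;
first [exact: d12 h1 h2 | exact: d13 h1 h3 | exact: d14 h1 h4 |
       exact: d23 h2 h3 | exact: d24 h2 h4 | exact: d34 h3 h4].
Qed.
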